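(* Let $G$ be a finite two-player zero-sum extensive form game with perfect recall (players $1,2$, possibly with chance). Let $t\ge 1$ and let $\boldsymbol{\sigma}^0=(\sigma^0_1,\sigma^0_2),\dots,\boldsymbol{\sigma}^t=(\sigma^t_1,\sigma^t_2)$ be any sequence of strategy profiles. Define the alternating-update average regrets $$r^t_1:=\max_{\sigma^*_1}\frac{1}{t}\sum_{i=0}^{t-1}\Bigl(u_1^{(\sigma^*_1,\sigma^i_2)}-u_1^{(\sigma^i_1,\sigma^i_2)}\Bigr),\qquad r^t_2:=\max_{\sigma^*_2}\frac{1}{t}\sum_{i=0}^{t-1}\Bigl(u_2^{(\sigma^{i+1}_1,\sigma^*_2)}-u_2^{(\sigma^{i+1}_1,\sigma^i_2)}\Bigr).$$ If $r^t_1\le\epsilon_1$ and $r^t_2\le\epsilon_2$, then $$\mathrm{expl}\bigl(\bar{\sigma}^{[1,t]}_1,\bar{\sigma}^{[0,t-1]}_2\bigr)\le \epsilon_1+\epsilon_2-\frac{1}{t}\sum_{i=0}^{t-1}\Bigl(u_1^{(\sigma^{i+1}_1,\sigma^i_2)}-u_1^{(\sigma^i_1,\sigma^i_2)}\Bigr).$$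
   Context: A strategy $\sigma_p$ of player $p$ assigns to each information set $I$ of player $p$ a probability distribution over the legal actions $A(I)$. $u_p^{\boldsymbol{\sigma}}$ denotes the expected utility of player $p$ under profile $\boldsymbol{\sigma}$ (chance acting according to its fixed probabilities); zero-sum means $u_1(z)+u_2(z)=0$ at every terminal history $z$. The maxima range over all strategies of the respective player. For strategies $\sigma^a_p,\dots,\sigma^b_p$, the average strategy $\bar{\sigma}^{[a,b]}_p$ is the strategy of player $p$ whose reach (realization) probabilities $\pi_p$ of every history are the uniform average of those of $\sigma^a_p,\dots,\sigma^b_p$ (equivalently, the uniform mixture of these strategies), so that $u^{(\bar\sigma^{[a,b]}_p,\sigma_{-p})}_q=\frac{1}{b-a+1}\sum_{i=a}^b u^{(\sigma^i_p,\sigma_{-p})}_q$ for any opponent strategy. The exploitability of a profile is $\mathrm{expl}(\sigma_1,\sigma_2):=\max_{\sigma^*_1}u_1^{(\sigma^*_1,\sigma_2)}-u_1^{(\sigma_1,\sigma_2)}+\max_{\sigma^*_2}u_2^{(\sigma_1,\sigma^*_2)}-u_2^{(\sigma_1,\sigma_2)}$, which by zero-sum equals $\max_{\sigma^*_1}u_1^{(\sigma^*_1,\sigma_2)}+\max_{\sigma^*_2}u_2^{(\sigma_1,\sigma^*_2)}$. *)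

(* Defs.v *)
From HB Require Import structures.
From mathcomp Require Import all_boot all_order all_algebra.
From Stdlib Require List.
Set Implicit Arguments. Unset Strict Implicit. Unset Printing Implicit Defensive.
Import Order.TTheory GRing.Theory Num.Theory.
Local Open Scope ring_scope.

Inductive player := P1 | P2.

(* A finite game tree.  [Leaf u]: terminal history with utility [u] for
   player 1 (player 2 gets [-u]: zero-sum).  [Chance cs]: chance node, child
   [c] reached with probability [p] for each [(p, c)] in [cs].
   [Dec J cs]: decision node in information set [J]; action [a] leads to the
   [a]-th element of [cs]. *)
Inductive tree (R Inf : Type) :=
| Leaf of R
| Chance of seq (R * tree R Inf)
| Dec of Inf & seq (tree R Inf).
Arguments Leaf {R Inf}.
Arguments Chance {R Inf}.
Arguments Dec {R Inf}.

Record efg (R : Type) := EFG {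
  Inf : Type;
  owner : Inf -> player;
  nact : Inf -> nat;          (* number of legal actions A(J) = {0..nact J - 1} *)
  root : tree R Inf }.

(* A step along a history: a chance outcome (with its probability) or
   action [a] taken at information set [J]. *)
Inductive step (R Inf : Type) := CStep of R | AStep of Inf & nat.
Arguments CStep {R Inf}.
Arguments AStep {R Inf}.

Section Game.
Variables (R : realFieldType) (Inf : Type).

Fixpoint hists (t : tree R Inf) : seq (seq (step R Inf)) :=
  [::] :: match t with
  | Leaf _ => [::]
  | Chance cs =>
      (fix go (cs : seq (R * tree R Inf)) := match cs with
        | [::] => [::]
        | (p, c) :: cs' => map (cons (CStep p)) (hists c) ++ go cs' end) cs
  | Dec J cs =>
      (fix go (n : nat) (cs : seq (tree R Inf)) := match cs with
        | [::] => [::]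
        | c :: cs' => map (cons (AStep J n)) (hists c) ++ go n.+1 cs' end) 0%N cs
  end.

Fixpoint terms (t : tree R Inf) : seq (seq (step R Inf) * R) :=
  match t with
  | Leaf u => [:: ([::], u)]
  | Chance cs =>
      (fix go (cs : seq (R * tree R Inf)) := match cs with
        | [::] => [::]
        | (p, c) :: cs' =>
            map (fun z => (CStep p :: z.1, z.2)) (terms c) ++ go cs' end) cs
  | Dec J cs =>
      (fix go (n : nat) (cs : seq (tree R Inf)) := match cs with
        | [::] => [::]
        | c :: cs' =>
            map (fun z => (AStep J n :: z.1, z.2)) (terms c) ++ go n.+1 cs' end) 0%N cs
  end.

Fixpoint decs (t : tree R Inf) : seq (Inf * seq (step R Inf)) :=
  match t with
  | Leaf _ => [::]
  | Chance cs =>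
      (fix go (cs : seq (R * tree R Inf)) := match cs with
        | [::] => [::]
        | (p, c) :: cs' =>
            map (fun d => (d.1, CStep p :: d.2)) (decs c) ++ go cs' end) cs
  | Dec J cs =>
      (J, [::]) ::
      (fix go (n : nat) (cs : seq (tree R Inf)) := match cs with
        | [::] => [::]
        | c :: cs' =>
            map (fun d => (d.1, AStep J n :: d.2)) (decs c) ++ go n.+1 cs' end) 0%N cs
  end.

Variables (owner : Inf -> player) (nact : Inf -> nat).

Definition is_owner (p : player) (J : Inf) : bool :=
  match p, owner J with P1, P1 | P2, P2 => true | _, _ => false end.

Fixpoint wf_tree (t : tree R Inf) : Prop :=
  match t with
  | Leaf _ => True
  | Chance cs =>
      cs <> [::] /\ (forall pc, List.In pc cs -> 0 <= pc.1) /\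
      \sum_(pc <- cs) pc.1 = 1 /\
      (fix go (cs : seq (R * tree R Inf)) := match cs with
        | [::] => True | (_, c) :: cs' => wf_tree c /\ go cs' end) cs
  | Dec J cs =>
      (0 < nact J)%N /\ size cs = nact J /\
      (fix go (cs : seq (tree R Inf)) := match cs with
        | [::] => True | c :: cs' => wf_tree c /\ go cs' end) cs
  end.

Definition own_seq (p : player) (h : seq (step R Inf)) : seq (Inf * nat) :=
  foldr (fun s acc => match s with
    | AStep J a => if is_owner p J then (J, a) :: acc else acc
    | CStep _ => acc end) [::] h.

Definition perfect_recall_tree (t : tree R Inf) : Prop :=
  forall J h h', List.In (J, h) (decs t) -> List.In (J, h') (decs t) ->
    own_seq (owner J) h = own_seq (owner J) h'.

(* behavioural strategies: sigma J a = probability of action a at J *)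
Definition strat := Inf -> nat -> R.

Definition is_strategy (p : player) (s : strat) : Prop :=
  forall J, owner J = p ->
    (forall a, (a < nact J)%N -> 0 <= s J a) /\ \sum_(a < nact J) s J a = 1.

Definition reach (p : player) (s : strat) (h : seq (step R Inf)) : R :=
  \prod_(st <- h) match st with
    | AStep J a => if is_owner p J then s J a else 1
    | CStep _ => 1 end.

Definition creach (h : seq (step R Inf)) : R :=
  \prod_(st <- h) match st with CStep q => q | AStep _ _ => 1 end.

Definition util1 (t : tree R Inf) (s1 s2 : strat) : R :=
  \sum_(z <- terms t) creach z.1 * reach P1 s1 z.1 * reach P2 s2 z.1 * z.2.
Definition util2 (t : tree R Inf) (s1 s2 : strat) : R :=
  \sum_(z <- terms t) creach z.1 * reach P1 s1 z.1 * reach P2 s2 z.1 * (- z.2).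

End Game.
Unset Implicit Arguments.

Definition wf_game {R : realFieldType} (g : efg R) :=
  wf_tree (@nact R g) (root g).
Definition perfect_recall {R : realFieldType} (g : efg R) :=
  perfect_recall_tree (@owner R g) (root g).
Definition Strat {R : realFieldType} (g : efg R) := strat R (Inf g).
Definition is_strat {R : realFieldType} (g : efg R) (p : player) (s : Strat g) :=
  is_strategy (@owner R g) (@nact R g) p s.
Definition u1 {R : realFieldType} (g : efg R) (s1 s2 : Strat g) :=
  util1 (@owner R g) (root g) s1 s2.
Definition u2 {R : realFieldType} (g : efg R) (s1 s2 : Strat g) :=
  util2 (@owner R g) (root g) s1 s2.

Definition is_avg_strat {R : realFieldType} (g : efg R) (p : player)
    (ss : nat -> Strat g) (a b : nat) (sbar : Strat g) : Prop :=
  is_strat g p sbar /\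
  forall h, List.In h (hists (root g)) ->
    reach (@owner R g) p sbar h =
      (b - a + 1)%:R^-1 * \sum_(a <= i < b.+1) reach (@owner R g) p (ss i) h.

(* exploitability, written as in the paper (max of a sum = sum of maxes) *)
Definition expl_le {R : realFieldType} (g : efg R) (s1 s2 : Strat g) (c : R) : Prop :=
  forall x1 x2 : Strat g, is_strat g P1 x1 -> is_strat g P2 x2 ->
    (u1 g x1 s2 - u1 g s1 s2) + (u2 g s1 x2 - u2 g s1 s2) <= c.

(* Main.v *)
Require Import Defs.
From HB Require Import structures.
From mathcomp Require Import all_boot all_order all_algebra.
From mathcomp Require Import ring lra.
Import Order.TTheory GRing.Theory Num.Theory.
Local Open Scope ring_scope.

Lemma terms_hists (R : realFieldType) (Inf : Type) :
  forall (t : tree R Inf) z, List.In z (terms t) -> List.In z.1 (hists t).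
Proof.
fix IH 1. case=> [u|cs|J cs] z /=.
- case=> [<-|[]]; by left.
- move=> H; right; move: cs z H; fix go 1; case=> [|[p c] cs'] z //=.
  rewrite !List.in_app_iff !List.in_map_iff.
  case=> [[z' [<- Hz']]|H]; [left; exists z'.1; split=> //; exact: IH | right; exact: go].
- move=> H; right; move: 0%N cs z H; fix go 2 => n; case=> [|c cs'] z //=.
  rewrite !List.in_app_iff !List.in_map_iff.
  case=> [[z' [<- Hz']]|H]; [left; exists z'.1; split=> //; exact: IH | right; exact: go].
Qed.

Lemma eq_big_In (R : realFieldType) (T : Type) (s : seq T) (f g : T -> R) :
  (forall z, List.In z s -> f z = g z) -> \sum_(z <- s) f z = \sum_(z <- s) g z.
Proof.
elim: s => [|x s IH] H; first by rewrite !big_nil.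
rewrite !big_cons H /=; last by left.
by rewrite IH // => z Hz; apply: H; right.
Qed.

Lemma u1_avg2 (R : realFieldType) (g : efg R) (x1 : Strat g) (ss : nat -> Strat g)
  (t : nat) (ht : (1 <= t)%N) sb :
  is_avg_strat g P2 ss 0 t.-1 sb ->
  u1 g x1 sb = t%:R^-1 * \sum_(i < t) u1 g x1 (ss i).
Proof.
move=> [_ H]; rewrite /u1 /util1.
rewrite (@eq_big_In _ _ _ _ (fun z => t%:R^-1 * \sum_(i < t)
   (creach z.1 * reach (@owner R g) P1 x1 z.1 * reach (@owner R g) P2 (ss i) z.1 * z.2))).
  by rewrite exchange_big /= mulr_sumr.
move=> z Hz; rewrite H; last exact: terms_hists.
rewrite subn0 addn1 prednK // big_mkord !mulr_sumr mulr_suml.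
by apply: eq_bigr => i _; ring.
Qed.

Lemma u2_avg1 (R : realFieldType) (g : efg R) (x2 : Strat g) (ss : nat -> Strat g)
  (t : nat) (ht : (1 <= t)%N) sb :
  is_avg_strat g P1 ss 1 t sb ->
  u2 g sb x2 = t%:R^-1 * \sum_(i < t) u2 g (ss i.+1) x2.
Proof.
move=> [_ H]; rewrite /u2 /util2.
rewrite (@eq_big_In _ _ _ _ (fun z => t%:R^-1 * \sum_(i < t)
   (creach z.1 * reach (@owner R g) P1 (ss i.+1) z.1 * reach (@owner R g) P2 x2 z.1 * - z.2))).
  by rewrite exchange_big /= mulr_sumr.
move=> z Hz; rewrite H; last exact: terms_hists.
rewrite subnK // big_add1 /= big_mkord !mulr_sumr !mulr_suml.
by apply: eq_bigr => i _; ring.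
Qed.

Lemma u12 (R : realFieldType) (g : efg R) a b : u2 g a b = - u1 g a b.
Proof.
rewrite /u2 /u1 /util2 /util1 -sumrN; apply: eq_bigr => z _; ring.
Qed.

Theorem theorem1 (R : realFieldType) (g : efg R)
  (Hwf : wf_game g) (Hpr : perfect_recall g)
  (t : nat) (ht : (1 <= t)%N)
  (s1 s2 : nat -> Strat g)
  (Hs1 : forall i, (i <= t)%N -> is_strat g P1 (s1 i))
  (Hs2 : forall i, (i <= t)%N -> is_strat g P2 (s2 i))
  (e1 e2 : R)
  (Hr1 : forall x1 : Strat g, is_strat g P1 x1 ->
     t%:R^-1 * \sum_(i < t) (u1 g x1 (s2 i) - u1 g (s1 i) (s2 i)) <= e1)
  (Hr2 : forall x2 : Strat g, is_strat g P2 x2 ->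
     t%:R^-1 * \sum_(i < t) (u2 g (s1 i.+1) x2 - u2 g (s1 i.+1) (s2 i)) <= e2)
  (sb1 sb2 : Strat g)
  (Hb1 : is_avg_strat g P1 s1 1 t sb1)
  (Hb2 : is_avg_strat g P2 s2 0 t.-1 sb2) :
  expl_le g sb1 sb2
    (e1 + e2 - t%:R^-1 * \sum_(i < t) (u1 g (s1 i.+1) (s2 i) - u1 g (s1 i) (s2 i))).
Proof.
move=> x1 x2 H1 H2.
have A := Hr1 _ H1; have B := Hr2 _ H2.
rewrite !big_split /= !sumrN !mulrDr !mulrN in A B *.
rewrite (@u12 _ g sb1 sb2) (@u1_avg2 _ g x1 s2 t ht sb2 Hb2) (@u2_avg1 _ g x2 s1 t ht sb1 Hb1).
have E : \sum_(i < t) u2 g (s1 i.+1) (s2 i) = - \sum_(i < t) u1 g (s1 i.+1) (s2 i).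
  by rewrite -sumrN; apply: eq_bigr => i _; rewrite u12.
rewrite E mulrN in B.
lra.
Qed.
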